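(* There exists a $\mathbb Q^\pi$-algebra automorphism $u\mapsto u^\dagger$ of $\mathbf U$ which restricts to the dagger involution on the scalars $\mathbb Q(v)^\pi$ (so $v^\dagger=\pi v$, $\pi^\dagger=\pi$) and satisfies, for all $i\in I$ and $\nu\in Y$, $$E_i^\dagger=\pi_i\tilde J_iE_i,\qquad F_i^\dagger=F_i,\qquad K_\nu^\dagger=J_\nu K_\nu,\qquad J_\nu^\dagger=J_\nu .$$
   Context: Setup. $I$ is a finite set with a partition $I=I_{\bar 0}\sqcup I_{\bar 1}$, $I_{\bar 1}\neq\emptyset$; $p(i)=0$ for $i\in I_{\bar0}$ and $p(i)=1$ for $i\in I_{\bar1}$. There is a symmetric $\mathbb Z$-bilinear form $\nu\cdot\nu'$ on $\mathbb Z[I]$ with $d_i:=\frac{i\cdot i}{2}\in\mathbb Z_{>0}$, $a_{ij}:=\frac{2\,i\cdot j}{i\cdot i}\in\mathbb Z_{\le 0}$ for $i\neq j$, $a_{ij}\in2\mathbb Z$ whenever $i\in I_{\bar1}$, and $d_i\equiv p(i)\pmod 2$ (hence $i\cdot j\in2\mathbb Z$ for all $i,j$). A root datum is fixed: free abelian groups $X,Y$ of finite rank with a perfect pairing $\langle\cdot,\cdot\rangle:Y\times X\to\mathbb Z$, a map $I\to Y$, $i\mapsto i$, with linearly independent image, and a map $I\to X$, $i\mapsto i'$, with $\langle i,j'\rangle=\frac{2\,i\cdot j}{i\cdot i}$. For $\nu=\sum\nu_i i\in\mathbb Z[I]$ put $p(\nu)=\sum\nu_ip(i)\in\mathbb Z/2$,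 $\mathrm{ht}\,\nu=\sum\nu_i$, $\tilde\nu=\sum d_i\nu_i i$, regard $\nu$ as an element of $Y$ via $i\mapsto i$, and put $\nu'=\sum\nu_ii'\in X$. $X^+=\{\lambda\in X:\langle i,\lambda\rangle\ge0\ \forall i\}$; $b_{ij}=1-a_{ij}$. Parameters: $\pi$ is an indeterminate with $\pi^2=1$; $\mathbb Z^\pi=\mathbb Z[\pi]/(\pi^2-1)$, $\mathbb Q^\pi=\mathbb Q[\pi]/(\pi^2-1)$, $\mathbb Q(v)^\pi=\mathbb Q(v)[\pi]/(\pi^2-1)$, $\mathbb A=\mathbb Z^\pi[v,v^{-1}]$. $v_i=v^{d_i}$, $\pi_i=\pi^{d_i}$, $v_\nu=\prod v_i^{\nu_i}$, $\pi_\nu=\prod\pi_i^{\nu_i}$. $[n]_{v,\pi}=\frac{(\pi v)^n-v^{-n}}{\pi v-v^{-1}}$, $[n]^!_{v,\pi}=\prod_{l=1}^n[l]_{v,\pi}$, $\begin{bmatrix}n\\k\end{bmatrix}_{v,\pi}=\prod_{l=n-k+1}^{n}((\pi v)^l-v^{-l})\big/\prod_{m=1}^k((\pi v)^m-v^{-m})$. The bar involution of $\mathbb Q(v)^\pi$ is the $\mathbb Q^\pi$-algebra automorphism $f(v,\pi)\mapsto f(\pi v^{-1},\pi)$. The quantum covering group $\mathbf U$ is the $\mathbb Q(v)^\pi$-algebra with generators $E_i,F_i$ ($i\in I$), $K_\mu,J_\mu$ ($\mu\in Y$) and relations: $K_\mu K_\nu=K_{\mu+\nu}$, $J_\mu J_\nu=J_{\mu+\nu}$,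 $K_0=J_0=J_\nu^2=1$, $J_\mu K_\nu=K_\nu J_\mu$; $J_\mu E_i=\pi^{\langle\mu,i'\rangle}E_iJ_\mu$, $J_\mu F_i=\pi^{-\langle\mu,i'\rangle}F_iJ_\mu$, $K_\mu E_i=v^{\langle\mu,i'\rangle}E_iK_\mu$, $K_\mu F_i=v^{-\langle\mu,i'\rangle}F_iK_\mu$; $E_iF_j-\pi^{p(i)p(j)}F_jE_i=\delta_{ij}\frac{\tilde J_i\tilde K_i-\tilde K_{-i}}{\pi_iv_i-v_i^{-1}}$; and for $i\neq j$, $\sum_{k=0}^{b_{ij}}(-1)^k\pi^{\binom k2p(i)+kp(i)p(j)}\begin{bmatrix}b_{ij}\\k\end{bmatrix}_{v_i,\pi_i}X_i^{b_{ij}-k}X_jX_i^k=0$ for $X=E$ and for $X=F$. Here $\tilde J_\nu=J_{\tilde\nu}$, $\tilde K_\nu=K_{\tilde\nu}$. The dagger involution of $\mathbb Q(v)^\pi$ is the $\mathbb Q^\pi$-algebra automorphism $f(v,\pi)\mapsto f(\pi v,\pi)$. *)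

(* Defs.v *)
From HB Require Import structures.
From mathcomp Require Import all_boot all_order all_algebra.
Set Implicit Arguments.
Unset Strict Implicit.
Unset Printing Implicit Defensive.
Import Order.TTheory GRing.Theory Num.Theory.
Local Open Scope ring_scope.

(*   Qvpi    = Q(v)^pi = Q(v)[pi]/(pi^2 - 1).  Since pi^2 - 1 = (pi-1)(pi+1) *)
(*             with coprime factors, Q(v)^pi is (Chinese remainder theorem)  *)
(*             the product ring Q(v) x Q(v) via a + b pi |-> (a+b, a-b);     *)
(*             we use this concrete model, in which pi = (1,-1) and v = (v,v)*)
Notation Qv := {fraction {poly rat}}.
Notation Qvpi := (Qv * Qv)%type.

Definition vF : Qv := tofrac 'X.

Definition piS : Qvpi := (1, -1).
Definition vS : Qvpi := (vF, vF).

Definition negv_poly (q : {poly rat}) : {poly rat} := q \Po (- 'X).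
Definition negvQv (x : Qv) : Qv :=
  tofrac (negv_poly \n_(repr x)) / tofrac (negv_poly \d_(repr x)).

(* The dagger involution f(v,pi) |-> f(pi v, pi) of Q(v)^pi.  In the model
   (pi = 1 component, pi = -1 component) it is (x, y) |-> (x(v), y(-v)). *)
Definition daggerS (c : Qvpi) : Qvpi := (c.1, negvQv c.2).

(*   dot i j   = i . j  (the symmetric bilinear form on Z[I], on the basis)  *)
(*   Y = X = Z^n (row vectors), pairing <y,x> = y P x^T, P unimodular.      *)
Definition dd (I : Type) (dot : I -> I -> int) (i : I) : nat :=
  (`|dot i i| %/ 2)%N.
Definition acart (I : Type) (dot : I -> I -> int) (i j : I) : int :=
  ((2 * dot i j) %/ dot i i)%Z.
Definition bser (I : Type) (dot : I -> I -> int) (i j : I) : nat :=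
  `|1 - acart dot i j|%N.

Definition pairing (n : nat) (P : 'M[int]_n) (y x : 'rV[int]_n) : int :=
  (y *m P *m x^T) 0 0.

Definition tildeY (I : Type) (n : nat) (dot : I -> I -> int)
  (iY : I -> 'rV[int]_n) (i : I) : 'rV[int]_n :=
  (Posz (dd dot i)) *: iY i.

Definition v_ (I : Type) (dot : I -> I -> int) (i : I) : Qvpi := vS ^+ dd dot i.
Definition pi_ (I : Type) (dot : I -> I -> int) (i : I) : Qvpi := piS ^+ dd dot i.

Definition qbinom (vv pp : Qvpi) (m k : nat) : Qvpi :=
  (\prod_(m - k + 1 <= l < m.+1) ((pp * vv) ^+ l - vv ^- l)) /
  (\prod_(1 <= l < k.+1) ((pp * vv) ^+ l - vv ^- l)).

(* The quantum covering group U: the Q(v)^pi-algebra presented by            *)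
(* generators and relations, realised as the free algebra of terms modulo    *)
(* the congruence ueq (algebra axioms + defining relations).                 *)
Inductive gen (I : Type) (n : nat) : Type :=
| GE of I | GF of I | GK of 'rV[int]_n | GJ of 'rV[int]_n.

Inductive term (I : Type) (n : nat) : Type :=
| tS of Qvpi                    (* scalar c (i.e. c * 1) *)
| tG of gen I n
| tAdd of term I n & term I n
| tMul of term I n & term I n.

Arguments GE {I n}. Arguments GF {I n}. Arguments GK {I n}. Arguments GJ {I n}.
Arguments tS {I n}. Arguments tG {I n}. Arguments tAdd {I n}. Arguments tMul {I n}.

Definition tpow (I : Type) (n : nat) (x : term I n) (m : nat) : term I n :=
  iter m (tMul x) (tS 1).
Definition tsum (I : Type) (n : nat) (s : seq (term I n)) : term I n :=
  foldr tAdd (tS 0) s.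

Definition serre (I : Type) (n : nat) (p : I -> bool) (dot : I -> I -> int)
  (X : I -> gen I n) (i j : I) : term I n :=
  let b := bser dot i j in
  tsum [seq tMul
          (tS ((-1) ^+ k * piS ^+ ('C(k, 2) * p i + k * (p i * p j))
               * qbinom (v_ dot i) (pi_ dot i) b k))
          (tMul (tpow (tG (X i)) (b - k))
                (tMul (tG (X j)) (tpow (tG (X i)) k)))
       | k <- iota 0 b.+1].

Inductive ueq (I : eqType) (p : I -> bool) (dot : I -> I -> int) (n : nat)
  (P : 'M[int]_n) (iY iX : I -> 'rV[int]_n) : term I n -> term I n -> Prop :=
| ueq_refl x : ueq p dot P iY iX x x
| ueq_sym x y : ueq p dot P iY iX x y -> ueq p dot P iY iX y x
| ueq_trans x y z : ueq p dot P iY iX x y -> ueq p dot P iY iX y z ->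
    ueq p dot P iY iX x z
| ueq_add x x' y y' : ueq p dot P iY iX x x' -> ueq p dot P iY iX y y' ->
    ueq p dot P iY iX (tAdd x y) (tAdd x' y')
| ueq_mul x x' y y' : ueq p dot P iY iX x x' -> ueq p dot P iY iX y y' ->
    ueq p dot P iY iX (tMul x y) (tMul x' y')
| ueq_addA x y z : ueq p dot P iY iX (tAdd x (tAdd y z)) (tAdd (tAdd x y) z)
| ueq_addC x y : ueq p dot P iY iX (tAdd x y) (tAdd y x)
| ueq_add0 x : ueq p dot P iY iX (tAdd (tS 0) x) x
| ueq_addN x : ueq p dot P iY iX (tAdd x (tMul (tS (-1)) x)) (tS 0)
| ueq_mulA x y z : ueq p dot P iY iX (tMul x (tMul y z)) (tMul (tMul x y) z)
| ueq_mul1l x : ueq p dot P iY iX (tMul (tS 1) x) x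
| ueq_mul1r x : ueq p dot P iY iX (tMul x (tS 1)) x
| ueq_mulDl x y z :
    ueq p dot P iY iX (tMul (tAdd x y) z) (tAdd (tMul x z) (tMul y z))
| ueq_mulDr x y z :
    ueq p dot P iY iX (tMul x (tAdd y z)) (tAdd (tMul x y) (tMul x z))
| ueq_SD a b : ueq p dot P iY iX (tS (a + b)) (tAdd (tS a) (tS b))
| ueq_SM a b : ueq p dot P iY iX (tS (a * b)) (tMul (tS a) (tS b))
| ueq_Scentral c x : ueq p dot P iY iX (tMul (tS c) x) (tMul x (tS c))
| r_KK mu nu : ueq p dot P iY iX (tMul (tG (GK mu)) (tG (GK nu))) (tG (GK (mu + nu)))
| r_JJ mu nu : ueq p dot P iY iX (tMul (tG (GJ mu)) (tG (GJ nu))) (tG (GJ (mu + nu)))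
| r_K0 : ueq p dot P iY iX (tG (GK 0)) (tS 1)
| r_J0 : ueq p dot P iY iX (tG (GJ 0)) (tS 1)
| r_J2 nu : ueq p dot P iY iX (tMul (tG (GJ nu)) (tG (GJ nu))) (tS 1)
| r_JK mu nu : ueq p dot P iY iX (tMul (tG (GJ mu)) (tG (GK nu)))
                                 (tMul (tG (GK nu)) (tG (GJ mu)))
| r_JE mu i : ueq p dot P iY iX (tMul (tG (GJ mu)) (tG (GE i)))
    (tMul (tS (piS ^ pairing P mu (iX i))) (tMul (tG (GE i)) (tG (GJ mu))))
| r_JF mu i : ueq p dot P iY iX (tMul (tG (GJ mu)) (tG (GF i)))
    (tMul (tS (piS ^ (- pairing P mu (iX i)))) (tMul (tG (GF i)) (tG (GJ mu))))
| r_KE mu i : ueq p dot P iY iX (tMul (tG (GK mu)) (tG (GE i)))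
    (tMul (tS (vS ^ pairing P mu (iX i))) (tMul (tG (GE i)) (tG (GK mu))))
| r_KF mu i : ueq p dot P iY iX (tMul (tG (GK mu)) (tG (GF i)))
    (tMul (tS (vS ^ (- pairing P mu (iX i)))) (tMul (tG (GF i)) (tG (GK mu))))
| r_EF i j : ueq p dot P iY iX
    (tAdd (tMul (tG (GE i)) (tG (GF j)))
          (tMul (tS (- piS ^+ (p i * p j))) (tMul (tG (GF j)) (tG (GE i)))))
    (tMul (tS ((i == j)%:R / (pi_ dot i * v_ dot i - (v_ dot i)^-1)))
          (tAdd (tMul (tG (GJ (tildeY dot iY i))) (tG (GK (tildeY dot iY i))))
                (tMul (tS (-1)) (tG (GK (- tildeY dot iY i))))))
| r_SerreE i j : i != j -> ueq p dot P iY iX (serre p dot GE i j) (tS 0)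
| r_SerreF i j : i != j -> ueq p dot P iY iX (serre p dot GF i j) (tS 0).

(* Main.v *)
Require Import Defs.
From HB Require Import structures.
From mathcomp Require Import all_boot all_order all_algebra.
From mathcomp Require Import ring.
From Stdlib Require Import Setoid Morphisms.
Import Order.TTheory GRing.Theory Num.Theory.
Local Open Scope ring_scope.

Lemma frac_pi (R : idomainType) (r : {ratio R}) :
  (\pi_({fraction R}) r : {fraction R})%qT * tofrac (\d_r) = tofrac (\n_r).
Proof.
rewrite /tofrac; unlock.
have E := FracField.pi_mul r (Ratio \d_r 1).
transitivity (\pi_({fraction R}) (FracField.mulf r (Ratio \d_r 1)))%qT.
  exact: (esym E).
apply/eqmodP; rewrite /= FracField.equivfE /FracField.mulf /=.
rewrite !numden_Ratio ?mulf_neq0 ?oner_eq0 ?denom_ratioP //.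
by rewrite !mulr1 mulrC.
Qed.

Lemma frac_repr (R : idomainType) (x : {fraction R}) :
  x = tofrac (\n_(repr x)) / tofrac (\d_(repr x)).
Proof.
have d0 : tofrac (\d_(repr x)) != 0 by rewrite tofrac_eq0 denom_ratioP.
by rewrite -[in RHS](@frac_pi R (repr x)) reprK mulfK.
Qed.

Arguments frac_repr {R}.
Arguments frac_pi {R}.

Lemma negv_polyK q : negv_poly (negv_poly q) = q.
Proof.
rewrite /negv_poly -comp_polyA.
have -> : (- 'X) \Po (- 'X) = 'X :> {poly rat}.
  by rewrite (raddfN (comp_poly (- 'X))) /= comp_polyX opprK.
by rewrite comp_polyXr.
Qed.
Lemma negv_polyD q r : negv_poly (q + r) = negv_poly q + negv_poly r.
Proof. exact: comp_polyD. Qed.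
Lemma negv_polyM q r : negv_poly (q * r) = negv_poly q * negv_poly r.
Proof. exact: comp_polyM. Qed.
Lemma negv_polyN q : negv_poly (- q) = - negv_poly q.
Proof. exact: (raddfN (comp_poly (- 'X))). Qed.
Lemma negv_poly1 : negv_poly 1 = 1.
Proof. exact: comp_polyC. Qed.
Lemma negv_polyX : negv_poly 'X = - 'X.
Proof. exact: comp_polyX. Qed.
Lemma negv_poly_eq0 q : (negv_poly q == 0) = (q == 0).
Proof.
apply/eqP/eqP => [h|->]; last exact: comp_poly0.
by rewrite -[q]negv_polyK h /negv_poly comp_poly0.
Qed.

Lemma negvQv_frac (a b : {poly rat}) : b != 0 ->
  negvQv (tofrac a / tofrac b) = tofrac (negv_poly a) / tofrac (negv_poly b).
Proof.
move=> b0.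
rewrite /negvQv.
have hx := (frac_repr (tofrac a / tofrac b)).
have hd := (denom_ratioP (repr (tofrac a / tofrac b))).
set r := repr _ in hx hd *.
set a0 := (\n_r) in hx *.
set b1 := (\d_r) in hx hd *.
clearbody a0 b1. clear r.
have tb : tofrac b != 0 by rewrite tofrac_eq0.
have tb0 : tofrac b1 != 0 by rewrite tofrac_eq0.
have e : a0 * b = a * b1.
  apply/eqP; rewrite -tofrac_eq !tofracM.
  move/eqP: hx; rewrite (eqr_div _ _ tb tb0) => /eqP ->.
  by rewrite mulrC.
have tb' : tofrac (negv_poly b) != 0 by rewrite tofrac_eq0 negv_poly_eq0.
have tb0' : tofrac (negv_poly b1) != 0 by rewrite tofrac_eq0 negv_poly_eq0.
apply/eqP; rewrite (eqr_div _ _ tb0' tb').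
by rewrite -!tofracM -!negv_polyM e mulrC.
Qed.

Lemma negvQv_gen (x : Qv) : exists a b, b != 0 /\ x = tofrac a / tofrac b.
Proof. exists (\n_(repr x)), (\d_(repr x)); split; [exact: denom_ratioP| exact: frac_repr]. Qed.

Lemma negvQv_tofrac a : negvQv (tofrac a) = tofrac (negv_poly a).
Proof.
have := negvQv_frac a 1 (oner_neq0 _).
by rewrite tofrac1 !divr1 negv_poly1 tofrac1 divr1.
Qed.

Lemma divB_gen (F : fieldType) (a b c d : F) : b != 0 -> d != 0 ->
  a / b - c / d = (a * d - c * b) / (b * d).
Proof.
move=> b0 d0; field; by rewrite b0 d0.
Qed.

Arguments divB_gen {F a b c d}.

Lemma negvQvB : zmod_morphism negvQv.
Proof.
move=> x y.
have [a [b [b0 ->]]] := negvQv_gen x.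
have [c [d [d0 ->]]] := negvQv_gen y.
have tb : tofrac b != 0 by rewrite tofrac_eq0.
have td : tofrac d != 0 by rewrite tofrac_eq0.
have tb' : tofrac (negv_poly b) != 0 by rewrite tofrac_eq0 negv_poly_eq0.
have td' : tofrac (negv_poly d) != 0 by rewrite tofrac_eq0 negv_poly_eq0.
rewrite (divB_gen tb td) -!tofracM -!tofracB.
rewrite (negvQv_frac _ _ (mulf_neq0 b0 d0)) (negvQv_frac _ _ b0) (negvQv_frac _ _ d0).
rewrite (divB_gen tb' td') -!tofracM -!tofracB.
by rewrite negv_polyM negv_polyD negv_polyN !negv_polyM.
Qed.

Lemma negvQvM : monoid_morphism negvQv.
Proof.
split.
  by rewrite -tofrac1 negvQv_tofrac negv_poly1.
move=> x y.
have [a [b [b0 ->]]] := negvQv_gen x.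
have [c [d [d0 ->]]] := negvQv_gen y.
have -> : tofrac a / tofrac b * (tofrac c / tofrac d)
   = tofrac (a * c) / tofrac (b * d).
  by rewrite !tofracM mulrACA invfM.
rewrite (negvQv_frac _ _ (mulf_neq0 b0 d0)) (negvQv_frac _ _ b0) (negvQv_frac _ _ d0).
rewrite !negv_polyM !tofracM.
by rewrite mulrACA invfM.
Qed.

HB.instance Definition _ := GRing.isZmodMorphism.Build Qv Qv negvQv negvQvB.
HB.instance Definition _ := GRing.isMonoidMorphism.Build Qv Qv negvQv negvQvM.

Lemma negvQvK x : negvQv (negvQv x) = x.
Proof.
have [a [b [b0 ->]]] := negvQv_gen x.
have b0' : negv_poly b != 0 by rewrite negv_poly_eq0.
by rewrite (negvQv_frac _ _ b0) (negvQv_frac _ _ b0') !negv_polyK.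
Qed.

Lemma negvQv_vF : negvQv vF = - vF.
Proof. by rewrite /vF negvQv_tofrac negv_polyX tofracN. Qed.


Lemma pairM (a b c d : Qv) : ((a, b) : Qvpi) * (c, d) = (a * c, b * d).
Proof. by []. Qed.
Lemma pair1 : (1 : Qvpi) = (1, 1).
Proof. by []. Qed.

Lemma daggerSB : zmod_morphism daggerS.
Proof. by case=> a b [c d]; rewrite /daggerS /= rmorphB. Qed.
Lemma daggerSM : monoid_morphism daggerS.
Proof.
split; first by rewrite /daggerS /= rmorph1.
by case=> a b [c d]; rewrite /daggerS /= rmorphM.
Qed.
HB.instance Definition _ := GRing.isZmodMorphism.Build Qvpi Qvpi daggerS daggerSB.
HB.instance Definition _ := GRing.isMonoidMorphism.Build Qvpi Qvpi daggerS daggerSM.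

Lemma daggerK x : daggerS (daggerS x) = x.
Proof. by case: x => a b; rewrite /daggerS /= negvQvK. Qed.

Lemma dagger_pi : daggerS piS = piS.
Proof. by rewrite /daggerS /piS /= rmorphN1. Qed.

Lemma dagger_v : daggerS vS = piS * vS.
Proof. by rewrite /daggerS /piS /vS /= negvQv_vF pairM mul1r mulN1r. Qed.

Lemma piS2 : piS * piS = 1.
Proof. by rewrite /piS pairM mulr1 mulrNN mulr1. Qed.

Lemma piS_unit : piS \is a GRing.unit.
Proof. by apply/unitrP; exists piS; rewrite piS2. Qed.

Lemma piSV : piS^-1 = piS.
Proof. by apply: (mulrI piS_unit); rewrite mulrV ?piS_unit // piS2. Qed.

Lemma vF_neq0 : vF != 0.
Proof. by rewrite /vF tofrac_eq0 polyX_eq0. Qed.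

Lemma vS_unit : vS \is a GRing.unit.
Proof.
apply/unitrP; exists (vF^-1, vF^-1).
by rewrite /vS !pairM mulVf ?mulfV ?vF_neq0.
Qed.

Lemma dagger_unit x : x \is a GRing.unit -> daggerS x \is a GRing.unit.
Proof.
move=> ux; apply/unitrP; exists (daggerS x^-1).
by rewrite -!rmorphM mulVr ?mulrV // rmorph1.
Qed.

Lemma daggerV x : daggerS x^-1 = (daggerS x)^-1.
Proof.
have [ux|nux] := boolP (x \is a GRing.unit).
  have h : daggerS x * daggerS x^-1 = 1 by rewrite -rmorphM mulrV // rmorph1.
  by rewrite -(mulKr (dagger_unit _ ux) (daggerS x^-1)) h mulr1.
have nd : daggerS x \isn't a GRing.unit.
  apply/negP => /dagger_unit; rewrite daggerK => h. by rewrite h in nux.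
by rewrite (invr_out nux) (invr_out nd).
Qed.

Lemma dagger_exprz x (z : int) : daggerS (x ^ z) = (daggerS x) ^ z.
Proof.
case: z => m; first exact: rmorphXn.
have E (y : Qvpi) : y ^ (Negz m) = (y ^+ m.+1)^-1 := erefl.
by rewrite !E daggerV rmorphXn.
Qed.

Lemma pow_piS m : piS ^+ m = if odd m then piS else 1.
Proof.
elim: m => [|m IH]; first by rewrite expr0.
by rewrite exprS IH /=; case: (odd m); rewrite /= ?piS2 ?mulr1.
Qed.

Lemma pow_piS_even m : ~~ odd m -> piS ^+ m = 1.
Proof. by rewrite pow_piS => /negPf ->. Qed.

Lemma powz_piS_even (z : int) : (2 %| z)%Z -> piS ^ z = 1.
Proof.
rewrite dvdzE dvdn2 => hz.
case: z hz => m hm; first exact: pow_piS_even.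
have E (y : Qvpi) : y ^ (Negz m) = (y ^+ m.+1)^-1 := erefl.
by rewrite E (@pow_piS_even m.+1 hm) invr1.
Qed.


Lemma inv_selfinv (R : comUnitRingType) (q D : R) : q * q = 1 -> (q * D)^-1 = q * D^-1.
Proof.
move=> qq.
have uq : q \is a GRing.unit by apply/unitrP; exists q.
have qV : q^-1 = q by rewrite -[q^-1]mulr1 -qq mulKr.
have [uD|nuD] := boolP (D \is a GRing.unit).
  by rewrite invrM // qV mulrC.
have nqD : q * D \isn't a GRing.unit.
  by apply: contra nuD => h; rewrite -(mulKr uq D) qV unitrMr.
by rewrite (invr_out nqD) (invr_out nuD).
Qed.
Arguments inv_selfinv {R q} D.

Lemma sum_shift (b k : nat) : (k <= b)%N ->
  (\sum_(b - k + 1 <= l < b.+1) l = \sum_(1 <= l < k.+1) l + k * (b - k))%N.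
Proof.
move=> kb.
rewrite addnC big_addn.
have -> : (b.+1 - (b - k) = k.+1)%N by rewrite subSn ?leq_subr // subKn.
by rewrite big_split /= sum_nat_const_nat subn1.
Qed.

Lemma pp_sq (d : nat) : piS ^+ d * piS ^+ d = 1.
Proof. by rewrite -exprMn piS2 expr1n. Qed.

Section GenFac.
Variables (R : comUnitRingType) (f : {rmorphism R -> R}).
Hypothesis fV : forall x, f x^-1 = (f x)^-1.
Variables (pp vv : R).
Hypotheses (ppp : pp * pp = 1) (fpp : f pp = pp) (fvv : f vv = pp * vv)
  (uv : vv \is a GRing.unit).

Lemma gen_fac (l : nat) :
  f ((pp * vv) ^+ l - vv ^- l) = pp ^+ l * ((pp * vv) ^+ l - vv ^- l).
Proof.
have q2 : pp ^+ l * pp ^+ l = 1 by rewrite -exprMn ppp expr1n.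
rewrite rmorphB fV !rmorphXn rmorphM fpp fvv.
rewrite [pp * (pp * vv)]mulrA ppp mul1r.
rewrite [(pp * vv) ^+ l]exprMn (inv_selfinv _ q2).
rewrite mulrBr [pp ^+ l * (pp ^+ l * _)]mulrA q2 mul1r.
by rewrite [pp ^+ l * _^-1]mulrC.
Qed.

Lemma gen_qbinom (b k : nat) : (k <= b)%N -> pp ^+ (k * (b - k)) = 1 ->
  f ((\prod_(b - k + 1 <= l < b.+1) ((pp * vv) ^+ l - vv ^- l)) /
     (\prod_(1 <= l < k.+1) ((pp * vv) ^+ l - vv ^- l))) =
  (\prod_(b - k + 1 <= l < b.+1) ((pp * vv) ^+ l - vv ^- l)) /
     (\prod_(1 <= l < k.+1) ((pp * vv) ^+ l - vv ^- l)).
Proof.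
move=> kb hodd.
rewrite rmorphM fV !rmorph_prod.
under eq_bigr do rewrite gen_fac.
under [X in _ * X^-1]eq_bigr do rewrite gen_fac.
rewrite !big_split /= !prodrXr.
rewrite (inv_selfinv _ (_ : pp ^+ _ * pp ^+ _ = 1)); last by rewrite -exprMn ppp expr1n.
rewrite mulrACA -exprD sum_shift // addnC addnA exprD exprD hodd mulr1.
by rewrite -exprMn ppp expr1n mul1r.
Qed.
Lemma gen_EF (c : bool) :
  f (c%:R / (pp * vv - vv^-1)) = pp * (c%:R / (pp * vv - vv^-1)).
Proof.
rewrite rmorphM rmorph_nat fV rmorphB fV rmorphM fpp fvv.
rewrite [pp * (pp * vv)]mulrA ppp mul1r (inv_selfinv _ ppp).
have -> : vv - pp * vv^-1 = pp * (pp * vv - vv^-1).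
  by rewrite mulrBr mulrA ppp mul1r.
by rewrite (inv_selfinv _ ppp) mulrCA.
Qed.
End GenFac.

Lemma dagger_Xn (x : Qvpi) (m : nat) : daggerS (x ^+ m) = daggerS x ^+ m.
Proof. exact: rmorphXn. Qed.
Lemma dagger_M (x y : Qvpi) : daggerS (x * y) = daggerS x * daggerS y.
Proof. exact: rmorphM. Qed.
Lemma dagger_Nr (x : Qvpi) : daggerS (- x) = - daggerS x.
Proof. exact: rmorphN. Qed.

Lemma dagger_pp (d : nat) : daggerS (piS ^+ d) = piS ^+ d.
Proof. by rewrite dagger_Xn dagger_pi. Qed.

Lemma dagger_vv (d : nat) : daggerS (vS ^+ d) = piS ^+ d * vS ^+ d.
Proof. by rewrite dagger_Xn dagger_v exprMn. Qed.
Lemma dagger_qbinom (d b k : nat) : (k <= b)%N -> ~~ odd (d * (k * (b - k))) ->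
  daggerS (qbinom (vS ^+ d) (piS ^+ d) b k) = qbinom (vS ^+ d) (piS ^+ d) b k.
Proof.
move=> kb h.
have H2 : (piS ^+ d) ^+ (k * (b - k)) = 1.
  by rewrite -exprM; apply: pow_piS_even.
rewrite /qbinom.
exact (@gen_qbinom _ daggerS daggerV _ _ (pp_sq d) (dagger_pp d) (dagger_vv d)
          b k kb H2).
Qed.

Lemma dagger_EF (d : nat) (c : bool) :
  daggerS (c%:R / (piS ^+ d * vS ^+ d - (vS ^+ d)^-1)) =
  piS ^+ d * (c%:R / (piS ^+ d * vS ^+ d - (vS ^+ d)^-1)).
Proof. exact (@gen_EF _ daggerS daggerV _ _ (pp_sq d) (dagger_pp d) (dagger_vv d) c). Qed.

Lemma dagger_piz (z : int) : daggerS (piS ^ z) = piS ^ z.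
Proof. by rewrite dagger_exprz dagger_pi. Qed.

Lemma dagger_vz (z : int) : daggerS (vS ^ z) = piS ^ z * vS ^ z.
Proof.
by rewrite dagger_exprz dagger_v (exprMz_comm z piS_unit vS_unit (mulrC piS vS)).
Qed.

Lemma dagger_Npim (m : nat) : daggerS (- piS ^+ m) = - piS ^+ m.
Proof. by rewrite dagger_Nr dagger_pp. Qed.

Lemma dagger_N1 : daggerS (-1) = -1.
Proof. exact: rmorphN1. Qed.
Lemma dagger_0 : daggerS 0 = 0.
Proof. exact: rmorph0. Qed.
Lemma dagger_1 : daggerS 1 = 1.
Proof. exact: rmorph1. Qed.

Lemma dagger_serre_coef (d b k e : nat) : (k <= b)%N -> ~~ odd (d * (k * (b - k))) ->
  daggerS ((-1) ^+ k * piS ^+ e * qbinom (vS ^+ d) (piS ^+ d) b k) =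
  (-1) ^+ k * piS ^+ e * qbinom (vS ^+ d) (piS ^+ d) b k.
Proof.
move=> kb h.
by rewrite dagger_M (dagger_qbinom _ _ _ kb h) dagger_M dagger_pp dagger_Xn dagger_N1.
Qed.


Lemma dagger_D (x y : Qvpi) : daggerS (x + y) = daggerS x + daggerS y.
Proof. exact: rmorphD. Qed.

Lemma mul3rev (R : comRingType) (a b c : R) : a * b * c = c * b * a.
Proof. by rewrite mulrC [a * b]mulrC mulrA. Qed.

Section U.
Variable I : finType.
Variables (p : I -> bool) (dot : I -> I -> int) (n : nat) (P : 'M[int]_n)
  (iY iX : I -> 'rV[int]_n).
Local Notation T := (term I n).
Local Notation eqU := (ueq p dot P iY iX).
Local Infix "≡" := eqU (at level 70).
Local Notation "x ⊗ y" := (tMul x y) (at level 40, left associativity).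
Local Notation "x ⊕ y" := (tAdd x y) (at level 50, left associativity).

Instance eqU_equiv : Equivalence eqU.
Proof. split; [exact: ueq_refl | exact: ueq_sym | exact: ueq_trans]. Qed.
Instance tAdd_proper : Proper (eqU ==> eqU ==> eqU) (@tAdd I n).
Proof. by move=> x x' hx y y' hy; apply: ueq_add. Qed.
Instance tMul_proper : Proper (eqU ==> eqU ==> eqU) (@tMul I n).
Proof. by move=> x x' hx y y' hy; apply: ueq_mul. Qed.

Lemma mulA' (x y z : T) : (x ⊗ y) ⊗ z ≡ x ⊗ (y ⊗ z).
Proof. symmetry; exact: ueq_mulA. Qed.
Lemma mulDr' (x y z : T) : x ⊗ (y ⊕ z) ≡ x ⊗ y ⊕ x ⊗ z.
Proof. exact: ueq_mulDr. Qed.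
Lemma mulDl' (x y z : T) : (x ⊕ y) ⊗ z ≡ x ⊗ z ⊕ y ⊗ z.
Proof. exact: ueq_mulDl. Qed.
Lemma mul1l' (x : T) : tS 1 ⊗ x ≡ x.
Proof. exact: ueq_mul1l. Qed.
Lemma mul1r' (x : T) : x ⊗ tS 1 ≡ x.
Proof. exact: ueq_mul1r. Qed.
Lemma Scent (c : Qvpi) (x : T) : tS c ⊗ x ≡ x ⊗ tS c.
Proof. exact: ueq_Scentral. Qed.
Lemma SM' (c d : Qvpi) : tS (c * d) ≡ (tS c ⊗ tS d : T).
Proof. exact: ueq_SM. Qed.
Lemma SD' (c d : Qvpi) : tS (c + d) ≡ (tS c ⊕ tS d : T).
Proof. exact: ueq_SD. Qed.
Lemma addN' (x : T) : x ⊕ tS (-1) ⊗ x ≡ tS 0.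
Proof. exact: ueq_addN. Qed.
Lemma SS (c d : Qvpi) (x : T) : tS c ⊗ (tS d ⊗ x) ≡ tS (c * d) ⊗ x.
Proof. rewrite -mulA' -SM'; reflexivity. Qed.
Lemma SS_end (c d : Qvpi) : tS c ⊗ tS d ≡ (tS (c * d) : T).
Proof. rewrite -SM'; reflexivity. Qed.
Lemma S_swapG (c : Qvpi) (g : gen I n) (y : T) :
  tG g ⊗ (tS c ⊗ y) ≡ tS c ⊗ (tG g ⊗ y).
Proof. rewrite -!mulA' (Scent c (tG g)); reflexivity. Qed.
Lemma S_swapG_end (c : Qvpi) (g : gen I n) :
  tG g ⊗ tS c ≡ (tS c ⊗ tG g : T).
Proof. rewrite (Scent c (tG g)); reflexivity. Qed.
Lemma S_congr (c d : Qvpi) (x : T) : c = d -> tS c ⊗ x ≡ tS d ⊗ x.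
Proof. move=> ->; reflexivity. Qed.

Lemma add0' (x : T) : tS 0 ⊕ x ≡ x.
Proof. exact: ueq_add0. Qed.
Lemma addC' (x y : T) : x ⊕ y ≡ y ⊕ x.
Proof. exact: ueq_addC. Qed.
Lemma addA' (x y z : T) : x ⊕ (y ⊕ z) ≡ x ⊕ y ⊕ z.
Proof. exact: ueq_addA. Qed.

Lemma mul0l' (x : T) : tS 0 ⊗ x ≡ tS 0.
Proof.
set z := tS 0 ⊗ x.
have hz : z ≡ z ⊕ z.
  rewrite /z -mulDl' -SD' addr0; reflexivity.
have : tS 0 ≡ z ⊕ tS (-1) ⊗ z by symmetry; apply: addN'.
rewrite {1}hz -addA' addN' addC' add0'.
move=> ->; reflexivity.
Qed.
Lemma mul0r' (x : T) : x ⊗ tS 0 ≡ tS 0.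
Proof. rewrite -Scent mul0l'; reflexivity. Qed.


Definition commU (a b : T) := a ⊗ b ≡ b ⊗ a.
Lemma commU_sym a b : commU a b -> commU b a.
Proof. rewrite /commU => ->; reflexivity. Qed.
Lemma commU_l a b z : commU a b -> a ⊗ (b ⊗ z) ≡ b ⊗ (a ⊗ z).
Proof. move=> h; rewrite -!mulA' h; reflexivity. Qed.
Lemma commU_S c x : commU (tS c) x.
Proof. exact: Scent. Qed.
Lemma commU_mull a b x : commU a x -> commU b x -> commU (a ⊗ b) x.
Proof. rewrite /commU => ha hb; rewrite mulA' hb -mulA' ha mulA'; reflexivity. Qed.
Lemma commU_mulr a b x : commU x a -> commU x b -> commU x (a ⊗ b).
Proof. by move=> ha hb; apply/commU_sym/commU_mull; apply/commU_sym. Qed.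
Lemma commU_1 x : commU (tS 1) x.
Proof. exact: commU_S. Qed.
Lemma commU_powr a b m : commU a b -> commU a (tpow b m).
Proof. by move=> h; elim: m => [|m IH]; [apply/commU_sym/commU_S | exact: commU_mulr]. Qed.
Lemma commU_powl a b m : commU a b -> commU (tpow a m) b.
Proof. by move=> h; apply/commU_sym/commU_powr/commU_sym. Qed.
Lemma commU_refl a : commU a a.
Proof. rewrite /commU; reflexivity. Qed.

Lemma tpowS (x : T) m : tpow x m.+1 = x ⊗ tpow x m.
Proof. by []. Qed.
Lemma tpowD (x : T) m k : tpow x (m + k) ≡ tpow x m ⊗ tpow x k.
Proof.
elim: m => [|m IH]; first by rewrite add0n /= mul1l'; reflexivity.
rewrite addSn !tpowS IH mulA'; reflexivity.
Qed.
Instance tpow_proper : Proper (eqU ==> eq ==> eqU) (@tpow I n).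
Proof.
move=> x y hxy m _ <-; elim: m => [|m IH]; first reflexivity.
rewrite !tpowS IH hxy; reflexivity.
Qed.
Lemma tpowM (a b : T) m : commU a b -> tpow (a ⊗ b) m ≡ tpow a m ⊗ tpow b m.
Proof.
move=> h; elim: m => [|m IH]; first by rewrite /= mul1l'; reflexivity.
rewrite !tpowS IH.
rewrite mulA' -[b ⊗ (tpow a m ⊗ tpow b m)]mulA'.
have hb : commU b (tpow a m) := commU_sym _ _ (commU_powl _ _ m h).
rewrite hb !mulA'; reflexivity.
Qed.

Lemma eq_tsum (s : seq nat) (f g : nat -> T) :
  (forall k, k \in s -> f k ≡ g k) -> tsum (map f s) ≡ tsum (map g s).
Proof.
elim: s => [|a s IH] h /=; first reflexivity.
rewrite (h a (mem_head _ _)) IH; first reflexivity.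
by move=> k ks; apply: h; rewrite inE ks orbT.
Qed.
Lemma tsum_mul (X : T) (s : seq nat) (f : nat -> T) :
  tsum (map (fun k => X ⊗ f k) s) ≡ X ⊗ tsum (map f s).
Proof.
elim: s => [|a s IH] /=; first by rewrite mul0r'; reflexivity.
rewrite IH mulDr'; reflexivity.
Qed.

Hypothesis Hpos : forall i, 0 < dot i i.
Hypothesis Hodd : forall i j, i != j -> p i -> (2 %| acart dot i j)%Z.
Hypothesis Hpar : forall i, odd (dd dot i) = p i.
Hypothesis HiX : forall i j, pairing P (iY i) (iX j) = acart dot i j.
Hypothesis Hneg : forall i j, i != j -> acart dot i j <= 0.

Local Notation ti i := (tildeY dot iY i).
Local Notation E i := (tG (GE i) : T).
Local Notation F i := (tG (GF i) : T).
Local Notation K mu := (tG (GK mu) : T).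
Local Notation J mu := (tG (GJ mu) : T).

Lemma pairing_tilde i k : pairing P (ti i) (iX k) = (dd dot i)%:Z * acart dot i k.
Proof. by rewrite /pairing /tildeY -!scalemxAl mxE -HiX. Qed.

Lemma acart_ii i : acart dot i i = 2.
Proof. by rewrite /acart mulzK // gt_eqF. Qed.

Lemma even_tilde i k : (2 %| pairing P (ti i) (iX k))%Z.
Proof.
rewrite pairing_tilde dvdzE abszM dvdn2 oddM Hpar.
have [pi|] := boolP (p i); last by [].
have [<-|ik] := eqVneq i k; first by rewrite acart_ii.
by move: (Hodd _ _ ik pi); rewrite dvdzE dvdn2 => ->.
Qed.

Lemma even_tildeN i k : (2 %| - pairing P (ti i) (iX k))%Z.
Proof. by rewrite dvdzE abszN -dvdzE even_tilde. Qed.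

Lemma JJ' mu nu : J mu ⊗ J nu ≡ J (mu + nu).
Proof. exact: r_JJ. Qed.
Lemma KK' mu nu : K mu ⊗ K nu ≡ K (mu + nu).
Proof. exact: r_KK. Qed.
Lemma JK' mu nu : J mu ⊗ K nu ≡ K nu ⊗ J mu.
Proof. exact: r_JK. Qed.
Lemma J0' : J 0 ≡ tS 1.
Proof. exact: r_J0. Qed.
Lemma K0' : K 0 ≡ tS 1.
Proof. exact: r_K0. Qed.
Lemma J2' mu : J mu ⊗ J mu ≡ tS 1.
Proof. exact: r_J2. Qed.
Lemma JE' mu i : J mu ⊗ E i ≡ tS (piS ^ pairing P mu (iX i)) ⊗ (E i ⊗ J mu).
Proof. exact: r_JE. Qed.
Lemma JF' mu i : J mu ⊗ F i ≡ tS (piS ^ (- pairing P mu (iX i))) ⊗ (F i ⊗ J mu).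
Proof. exact: r_JF. Qed.
Lemma KE' mu i : K mu ⊗ E i ≡ tS (vS ^ pairing P mu (iX i)) ⊗ (E i ⊗ K mu).
Proof. exact: r_KE. Qed.
Lemma KF' mu i : K mu ⊗ F i ≡ tS (vS ^ (- pairing P mu (iX i))) ⊗ (F i ⊗ K mu).
Proof. exact: r_KF. Qed.

Lemma commU_JJ mu nu : commU (J mu) (J nu).
Proof. rewrite /commU !JJ' addrC; reflexivity. Qed.
Lemma commU_JK mu nu : commU (J mu) (K nu).
Proof. exact: JK'. Qed.
Lemma commU_JtE i k : commU (J (ti i)) (E k).
Proof. rewrite /commU JE' powz_piS_even ?even_tilde // mul1l'; reflexivity. Qed.
Lemma commU_JtF i k : commU (J (ti i)) (F k).
Proof. rewrite /commU JF' powz_piS_even ?even_tildeN // mul1l'; reflexivity. Qed.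
Lemma JJcancel mu z : J mu ⊗ (J mu ⊗ z) ≡ z.
Proof. rewrite -mulA' J2' mul1l'; reflexivity. Qed.
Lemma Jneg mu : J (- mu) ≡ J mu.
Proof.
rewrite -[J (- mu)]mul1r' -(J2' mu) -mulA' JJ' addNr J0' mul1l'; reflexivity.
Qed.

Fixpoint phi (x : T) : T :=
  match x with
  | tS c => tS (daggerS c)
  | tG (GE i) => tS (pi_ dot i) ⊗ (J (ti i) ⊗ E i)
  | tG (GF i) => F i
  | tG (GK nu) => J nu ⊗ K nu
  | tG (GJ nu) => J nu
  | tAdd a b => phi a ⊕ phi b
  | tMul a b => phi a ⊗ phi b
  end.

Definition G i : T := tS (pi_ dot i) ⊗ J (ti i).

Lemma phiE_G i : phi (E i) ≡ G i ⊗ E i.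
Proof. rewrite /= /G mulA'; reflexivity. Qed.
Lemma commU_GE i k : commU (G i) (E k).
Proof. apply: commU_mull; [exact: commU_S | exact: commU_JtE]. Qed.
Lemma commU_GF i k : commU (G i) (F k).
Proof. apply: commU_mull; [exact: commU_S | exact: commU_JtF]. Qed.
Lemma commU_GG i j : commU (G i) (G j).
Proof.
apply: commU_mull; first exact: commU_S.
apply: commU_mulr; [apply: commU_sym; exact: commU_S | exact: commU_JJ].
Qed.

Lemma phi_tpow x m : phi (tpow x m) ≡ tpow (phi x) m.
Proof.
elim: m => [|m IH]; first by rewrite /= dagger_1; reflexivity.
rewrite tpowS /= IH; reflexivity.
Qed.

Lemma phi_tsum s : phi (tsum s) ≡ tsum (map phi s).
Proof.
elim: s => [|a s IH]; first by rewrite /= dagger_0; reflexivity.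
rewrite /= IH; reflexivity.
Qed.

Ltac norm := rewrite ?mulA'; repeat progress rewrite ?SS ?SS_end ?S_swapG ?S_swapG_end.

Lemma JE_l mu i z : J mu ⊗ (E i ⊗ z) ≡ tS (piS ^ pairing P mu (iX i)) ⊗ (E i ⊗ (J mu ⊗ z)).
Proof. rewrite -mulA' JE' !mulA'; reflexivity. Qed.
Lemma JF_l mu i z : J mu ⊗ (F i ⊗ z) ≡ tS (piS ^ (- pairing P mu (iX i))) ⊗ (F i ⊗ (J mu ⊗ z)).
Proof. rewrite -mulA' JF' !mulA'; reflexivity. Qed.
Lemma KE_l mu i z : K mu ⊗ (E i ⊗ z) ≡ tS (vS ^ pairing P mu (iX i)) ⊗ (E i ⊗ (K mu ⊗ z)).
Proof. rewrite -mulA' KE' !mulA'; reflexivity. Qed.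
Lemma KF_l mu i z : K mu ⊗ (F i ⊗ z) ≡ tS (vS ^ (- pairing P mu (iX i))) ⊗ (F i ⊗ (K mu ⊗ z)).
Proof. rewrite -mulA' KF' !mulA'; reflexivity. Qed.

Lemma case_KK mu nu : phi (K mu ⊗ K nu) ≡ phi (K (mu + nu)).
Proof.
rewrite /= mulA' (commU_l _ _ _ (commU_sym _ _ (commU_JK nu mu))) -mulA' JJ' KK'.
reflexivity.
Qed.

Lemma case_JK mu nu : phi (J mu ⊗ K nu) ≡ phi (K nu ⊗ J mu).
Proof.
rewrite /= (commU_l _ _ _ (commU_JJ mu nu)) JK' mulA'; reflexivity.
Qed.

Lemma case_JE mu i :
  phi (J mu ⊗ E i) ≡ phi (tS (piS ^ pairing P mu (iX i)) ⊗ (E i ⊗ J mu)).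
Proof.
rewrite /= dagger_piz S_swapG (commU_l _ _ _ (commU_JJ mu _)) (JE' mu i).
norm. apply: S_congr; exact: mulrC.
Qed.

Lemma case_JF mu i :
  phi (J mu ⊗ F i) ≡ phi (tS (piS ^ (- pairing P mu (iX i))) ⊗ (F i ⊗ J mu)).
Proof. rewrite /= dagger_piz; exact: JF'. Qed.

Lemma case_KE mu i :
  phi (K mu ⊗ E i) ≡ phi (tS (vS ^ pairing P mu (iX i)) ⊗ (E i ⊗ K mu)).
Proof.
rewrite /= dagger_vz. norm.
rewrite (commU_l _ _ _ (commU_sym _ _ (commU_JK _ mu))) (KE' mu i).
norm. rewrite (commU_l _ _ _ (commU_JJ mu _)) (JE_l mu i). norm.
apply: S_congr; exact: mul3rev.
Qed.

Lemma case_KF mu i :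
  phi (K mu ⊗ F i) ≡ phi (tS (vS ^ (- pairing P mu (iX i))) ⊗ (F i ⊗ K mu)).
Proof.
rewrite /= dagger_vz. norm.
rewrite (KF' mu i). norm. rewrite (JF_l mu i). norm.
apply: S_congr; exact: mulrC.
Qed.

Lemma EF' i j : E i ⊗ F j ⊕ tS (- piS ^+ (p i * p j)) ⊗ (F j ⊗ E i) ≡
  tS ((i == j)%:R / (pi_ dot i * v_ dot i - (v_ dot i)^-1)) ⊗
    (J (ti i) ⊗ K (ti i) ⊕ tS (-1) ⊗ K (- ti i)).
Proof. exact: r_EF. Qed.

Lemma case_EF i j :
  phi (E i ⊗ F j ⊕ tS (- piS ^+ (p i * p j)) ⊗ (F j ⊗ E i)) ≡
  phi (tS ((i == j)%:R / (pi_ dot i * v_ dot i - (v_ dot i)^-1)) ⊗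
    (J (ti i) ⊗ K (ti i) ⊕ tS (-1) ⊗ K (- ti i))).
Proof.
rewrite /= dagger_Npim.
transitivity (tS (pi_ dot i) ⊗ (J (ti i) ⊗
   (E i ⊗ F j ⊕ tS (- piS ^+ (p i * p j)) ⊗ (F j ⊗ E i)))).
  rewrite !mulDr'. norm.
  rewrite (commU_l _ _ _ (commU_sym _ _ (commU_JtF i j))).
  apply: ueq_add; first reflexivity.
  apply: S_congr; exact: mulrC.
rewrite EF' dagger_N1 Jneg /pi_ /v_ dagger_EF.
norm. rewrite !mulDr'. norm. reflexivity.
Qed.

Lemma bser_odd i j : i != j -> p i -> odd (bser dot i j).
Proof.
move=> ij pi.
have a0 := Hneg _ _ ij.
have ev := Hodd _ _ ij pi.
rewrite /bser.
move: a0 ev; set a := acart dot i j => a0 ev.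
have -> : 1 - a = Posz (1 + `|a|)%N.
  by rewrite PoszD (lez0_abs a0).
rewrite absz_nat /=.
by move: ev; rewrite dvdzE dvdn2 => ->.
Qed.

Lemma serre_par i j k : i != j -> (k <= bser dot i j)%N ->
  ~~ odd (dd dot i * (k * (bser dot i j - k))).
Proof.
move=> ij kb.
rewrite oddM Hpar.
have [pi|] := boolP (p i); last by [].
rewrite oddM (oddB kb) (bser_odd _ _ ij pi) /=.
by case: (odd k).
Qed.

Lemma rearr (a1 b1 a2 b2 a3 b3 : T) :
  commU a2 b1 -> commU a3 b1 -> commU a3 b2 -> commU a1 a2 ->
  (a1 ⊗ b1) ⊗ ((a2 ⊗ b2) ⊗ (a3 ⊗ b3)) ≡ (a2 ⊗ (a1 ⊗ a3)) ⊗ (b1 ⊗ (b2 ⊗ b3)).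
Proof.
move=> h21 h31 h32 h12.
rewrite !mulA'.
rewrite (commU_l _ _ _ (commU_sym _ _ h21)).
rewrite (commU_l _ _ _ (commU_sym _ _ h32)).
rewrite (commU_l _ _ _ (commU_sym _ _ h31)).
rewrite (commU_l _ _ _ h12).
reflexivity.
Qed.

Lemma case_SerreF i j : i != j -> phi (serre p dot GF i j) ≡ tS 0.
Proof.
move=> ij.
rewrite -(r_SerreF p dot P iY iX ij).
rewrite /serre phi_tsum -map_comp.
apply: eq_tsum => k hk.
have kb : (k <= bser dot i j)%N by move: hk; rewrite mem_iota add0n ltnS.
rewrite /= (dagger_serre_coef _ _ _ _ kb (serre_par _ _ _ ij kb)) !phi_tpow /=.
reflexivity.
Qed.

Lemma case_SerreE i j : i != j -> phi (serre p dot GE i j) ≡ tS 0.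
Proof.
move=> ij.
rewrite -(mul0r' (G j ⊗ tpow (G i) (bser dot i j))).
rewrite -(r_SerreE p dot P iY iX ij).
rewrite /serre phi_tsum -map_comp -tsum_mul.
apply: eq_tsum => k hk.
have kb : (k <= bser dot i j)%N by move: hk; rewrite mem_iota add0n ltnS.
rewrite /= (dagger_serre_coef _ _ _ _ kb (serre_par _ _ _ ij kb)) !phi_tpow.
rewrite (_ : tS (pi_ dot j) ⊗ (J (ti j) ⊗ E j) ≡ G j ⊗ E j); last exact: phiE_G.
rewrite !phiE_G !(tpowM _ _ _ (commU_GE i i)).
rewrite (rearr _ _ _ _ _ _ (commU_powr _ _ _ (commU_GE j i))
  (commU_powl _ _ _ (commU_powr _ _ _ (commU_GE i i)))
  (commU_powl _ _ _ (commU_GE i j)) (commU_powl _ _ _ (commU_GG i j))).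
rewrite -tpowD subnK //.
rewrite (commU_l _ _ _ (commU_S _ (G j ⊗ tpow (G i) (bser dot i j)))).
reflexivity.
Qed.

Lemma phi_wd x y : x ≡ y -> phi x ≡ phi y.
Proof.
elim=> {x y}.
- move=> x; reflexivity.
- move=> x y _ h; symmetry; exact: h.
- move=> x y z _ h1 _ h2; etransitivity; [exact: h1 | exact: h2].
- move=> x x' y y' _ h1 _ h2 /=; rewrite h1 h2; reflexivity.
- move=> x x' y y' _ h1 _ h2 /=; rewrite h1 h2; reflexivity.
- move=> x y z /=; exact: ueq_addA.
- move=> x y /=; exact: ueq_addC.
- move=> x /=; rewrite dagger_0; exact: ueq_add0.
- move=> x /=; rewrite dagger_N1 dagger_0; exact: ueq_addN.
- move=> x y z /=; exact: ueq_mulA.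
- move=> x /=; rewrite dagger_1; exact: ueq_mul1l.
- move=> x /=; rewrite dagger_1; exact: ueq_mul1r.
- move=> x y z /=; exact: ueq_mulDl.
- move=> x y z /=; exact: ueq_mulDr.
- move=> a b /=; rewrite dagger_D; exact: ueq_SD.
- move=> a b /=; rewrite dagger_M; exact: ueq_SM.
- move=> c x /=; exact: ueq_Scentral.
- move=> mu nu; exact: case_KK.
- move=> mu nu /=; exact: r_JJ.
- rewrite /= dagger_1 J0' K0' mul1l'; reflexivity.
- rewrite /= dagger_1; exact: r_J0.
- move=> nu; rewrite /= dagger_1; exact: r_J2.
- move=> mu nu; exact: case_JK.
- move=> mu i; exact: case_JE.
- move=> mu i; exact: case_JF.
- move=> mu i; exact: case_KE.
- move=> mu i; exact: case_KF.
- move=> i j; exact: case_EF.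
- move=> i j ij; rewrite case_SerreE // /= dagger_0; reflexivity.
- move=> i j ij; rewrite case_SerreF // /= dagger_0; reflexivity.
Qed.

Lemma phiK x : phi (phi x) ≡ x.
Proof.
elim: x => [c|g|a IHa b IHb|a IHa b IHb].
- rewrite /= daggerK; reflexivity.
- case: g => [i|i|nu|nu] /=.
  + rewrite /pi_ dagger_pp. norm. rewrite JJcancel pp_sq mul1l'; reflexivity.
  + reflexivity.
  + rewrite JJcancel; reflexivity.
  + reflexivity.
- rewrite /= IHa IHb; reflexivity.
- rewrite /= IHa IHb; reflexivity.
Qed.

End U.

Theorem mainTheorem1 (I : finType) (p : I -> bool) (dot : I -> I -> int)
  (n : nat) (P : 'M[int]_n) (iY iX : I -> 'rV[int]_n)
  (* the bilinear form *)
  (Hsym : forall i j, dot i j = dot j i)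
  (Hpos : forall i, 0 < dot i i)
  (Heven : forall i, (2 %| dot i i)%Z)
  (Hint : forall i j, i != j -> (dot i i %| 2 * dot i j)%Z)
  (Hneg : forall i j, i != j -> acart dot i j <= 0)
  (Hodd : forall i j, i != j -> p i -> (2 %| acart dot i j)%Z)
  (Hpar : forall i, odd (dd dot i) = p i)
  (HI1 : exists i, p i)
  (* the root datum *)
  (HP : P \in unitmx)
  (HiY : forall c : I -> int, \sum_i c i *: iY i = 0 -> forall i, c i = 0)
  (HiX : forall i j, pairing P (iY i) (iX j) = acart dot i j) :
  let ueqU := ueq p dot P iY iX in
  exists phi : term I n -> term I n,
    (* phi is well defined on U = term / ueqU ... *)
    (forall x y, ueqU x y -> ueqU (phi x) (phi y)) /\
    (* ... a ring morphism ... *)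
    (forall x y, ueqU (phi (tAdd x y)) (tAdd (phi x) (phi y))) /\
    (forall x y, ueqU (phi (tMul x y)) (tMul (phi x) (phi y))) /\
    (* ... restricting to the dagger involution on the scalars ... *)
    (forall c, ueqU (phi (tS c)) (tS (daggerS c))) /\
    (* ... bijective on U ... *)
    (exists psi : term I n -> term I n,
        (forall x y, ueqU x y -> ueqU (psi x) (psi y)) /\
        (forall x, ueqU (psi (phi x)) x) /\
        (forall y, ueqU (phi (psi y)) y)) /\
    (* ... with the prescribed values on generators *)
    (forall i, ueqU (phi (tG (GE i)))
        (tMul (tS (pi_ dot i)) (tMul (tG (GJ (tildeY dot iY i))) (tG (GE i))))) /\
    (forall i, ueqU (phi (tG (GF i))) (tG (GF i))) /\
    (forall nu, ueqU (phi (tG (GK nu))) (tMul (tG (GJ nu)) (tG (GK nu)))) /\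
    (forall nu, ueqU (phi (tG (GJ nu))) (tG (GJ nu))).
Proof.
move=> ueqU.
have wd : forall x y, ueqU x y -> ueqU (@phi I dot n iY x) (@phi I dot n iY y).
  by move=> x y h; apply: phi_wd.
exists (@phi I dot n iY).
split; first exact: wd.
split; first by move=> x y; apply: ueq_refl.
split; first by move=> x y; apply: ueq_refl.
split; first by move=> c; apply: ueq_refl.
split.
  exists (@phi I dot n iY); split; first exact: wd.
  split; move=> x; apply: phiK => //.
split; first by move=> i; apply: ueq_refl.
split; first by move=> i; apply: ueq_refl.
split; first by move=> nu; apply: ueq_refl.
by move=> nu; apply: ueq_refl.
Qed.
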